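(* Let $k\ge 2$ and $R(z)=\sum_{l=1}^k\frac{\alpha_l}{z-p_l}$ with all $\alpha_l>0$, $p_1=-1$, $p_2=1$, and $p_l>1$ for $3\le l\le k$. Define $g(x)=\operatorname{Re}R\!\left(x+i\sqrt{1-x^2}\right)$ for $x\in(-1,1)$ (the real part of $R$ along the open upper unit half-circle). If $k\ge 3$, then $g$ is strictly decreasing on $(-1,1)$; if $k=2$, then $g$ is constant, equal to $\frac{\alpha_1-\alpha_2}{2}$. *)

(* Defs.v *)
(* The complex plane is modelled by an arbitrary
   numClosedFieldType C (e.g. C = complex numbers), with 'i, 'Re, sqrtC. *)
From HB Require Import structures.
From mathcomp Require Import all_boot all_order all_algebra.
Set Implicit Arguments. Unset Strict Implicit. Unset Printing Implicit Defensive.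
Import Order.TTheory GRing.Theory Num.Theory.
Local Open Scope ring_scope.

(* R(z) = sum_{l=1}^k alpha_l / (z - p_l); indices shifted to 0..k-1 *)
Definition Rfun (C : numClosedFieldType) (k : nat) (alpha p : nat -> C) (z : C) : C :=
  \sum_(l < k) alpha l / (z - p l).

Definition gfun (C : numClosedFieldType) (k : nat) (alpha p : nat -> C) (x : C) : C :=
  'Re (Rfun k alpha p (x + 'i * sqrtC (1 - x ^+ 2))).

(* Main.v *)
Require Import Defs.
From HB Require Import structures.
From mathcomp Require Import all_boot all_order all_algebra.
Import Order.TTheory GRing.Theory Num.Theory.
Set Implicit Arguments. Unset Strict Implicit.
Local Open Scope ring_scope.

Definition Dd {C : numClosedFieldType} (p x : C) := (x - p) ^+ 2 + (1 - x ^+ 2).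
Definition hterm {C : numClosedFieldType} (p x : C) := (x - p) / Dd p x.

Lemma one_sub_sq_gt0 {C : numClosedFieldType} {x : C} : -1 < x -> x < 1 -> 0 < 1 - x ^+ 2.
Proof.
move=> h1 h2.
have ->: 1 - x ^+ 2 = (1 - x) * (1 + x) by rewrite -subr_sqr expr1n.
apply: mulr_gt0; first by rewrite subr_gt0.
by rewrite -(opprK x) subr_gt0 ltrNl.
Qed.

Lemma gfun_sum (C : numClosedFieldType) (k : nat) (alpha p : nat -> C) (x : C) :
  (forall l, (l < k)%N -> alpha l \is Num.real) ->
  (forall l, (l < k)%N -> p l \is Num.real) ->
  x \is Num.real -> -1 < x -> x < 1 ->
  gfun k alpha p x = \sum_(l < k) alpha l * hterm (p l) x.
Proof.
move=> aR pR xR h1 h2.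
rewrite /gfun /Rfun raddf_sum; apply: eq_bigr => l _.
have lk := ltn_ord l.
have hpos := one_sub_sq_gt0 h1 h2.
set s := sqrtC (1 - x ^+ 2).
have sR : s \is Num.real by apply: sqrtC_real; apply: ltW.
have s2 : s ^+ 2 = 1 - x ^+ 2 by rewrite /s sqrtCK.
rewrite /= ReMl ?aR // ReV.
have ->: x + 'i * s - p l = (x - p l) + 'i * s by rewrite addrAC.
have xpR : x - p l \is Num.real by rewrite rpredB ?pR.
by rewrite normC2_Re_Im Re_rect ?Im_rect // s2.
Qed.

Lemma Did (C : comNzRingType) (p x : C) : (x - p) ^+ 2 + (1 - x ^+ 2) = (1 - p ^+ 2) - (p *+ 2) * (x - p).
Proof.
rewrite sqrrB mulrBr mulr2n !mulrDl -!expr2 opprB (mulrC p x).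
rewrite [LHS]addrC !addrA subrK [RHS]addrC !addrA.
rewrite subrK (addrC (- _) 1). done.
Qed.

Lemma Dd_gt0 (C : numClosedFieldType) (p x : C) : 1 < p -> -1 < x -> x < 1 -> 0 < Dd p x.
Proof.
move=> hp h1 h2; rewrite /Dd; apply: addr_gt0; last exact: one_sub_sq_gt0.
rewrite -sqrrN opprB; apply: exprn_gt0; rewrite subr_gt0; exact: lt_trans hp.
Qed.

Lemma cross (R : comNzRingType) (a b q t : R) :
  a * (q - t * b) - b * (q - t * a) = (a - b) * q.
Proof.
rewrite !mulrBr (mulrCA a) (mulrCA b) (mulrC b a).
by rewrite opprB addrA subrK -mulrBl.
Qed.

Lemma hterm_dec (C : numClosedFieldType) (p x y : C) : 1 < p -> -1 < x -> x < y -> y < 1 ->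
  hterm p y < hterm p x.
Proof.
move=> hp h1 hxy h2.
have h1y : -1 < y by apply: lt_trans hxy.
have h2x : x < 1 by apply: lt_trans h2.
have Dx := Dd_gt0 hp h1 h2x.
have Dy := Dd_gt0 hp h1y h2.
rewrite /hterm ltr_pdivrMr // mulrAC ltr_pdivlMr // -subr_gt0.
rewrite /Dd !Did.
rewrite cross.
have ->: x - p - (y - p) = - (y - x) by rewrite opprB addrA subrK opprB.
rewrite -(opprB (p ^+ 2)) mulrNN; apply: mulr_gt0; first by rewrite subr_gt0.
rewrite -(expr1n _ 2) subr_sqr; apply: mulr_gt0; first by rewrite subr_gt0.
apply: addr_gt0 => //; exact: lt_trans ltr01 hp.
Qed.

Lemma two_eq (C : numClosedFieldType) (x : C) : x + 1 + (1 - x) = 2.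
Proof. by rewrite addrC addrA subrK. Qed.

Lemma hterm_m1 (C : numClosedFieldType) (x : C) : -1 < x -> x < 1 -> hterm (-1) x = 2^-1.
Proof.
move=> h1 h2; rewrite /hterm /Dd opprK.
have ->: 1 - x ^+ 2 = (1 - x) * (1 + x) by rewrite -subr_sqr expr1n.
have hx : x + 1 != 0 by rewrite gt_eqF // -(opprK 1) subr_gt0.
rewrite expr2 (addrC 1 x) -(mulrDl (x + 1) (1 - x) (x + 1)) two_eq invfM mulrCA divff // mulr1. reflexivity.
Qed.

Lemma hterm_1 (C : numClosedFieldType) (x : C) : -1 < x -> x < 1 -> hterm 1 x = - 2^-1.
Proof.
move=> h1 h2; rewrite /hterm /Dd.
have ->: 1 - x ^+ 2 = (1 - x) * (1 + x) by rewrite -subr_sqr expr1n.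
have hx : 1 - x != 0 by rewrite gt_eqF // subr_gt0.
rewrite -sqrrN opprB expr2 -(mulrDr (1 - x)) (addrC (1 - x)) (addrC 1 x) two_eq.
rewrite invfM -(opprB 1 x) mulNr mulrA divff // mul1r. reflexivity.
Qed.

Unset Implicit Arguments.

Theorem lemma3 (C : numClosedFieldType) (k : nat) (alpha p : nat -> C)
  (hk : (2 <= k)%N)
  (halpha_real : forall l, (l < k)%N -> alpha l \is Num.real)
  (halpha_pos : forall l, (l < k)%N -> 0 < alpha l)
  (hp0 : p 0%N = -1) (hp1 : p 1%N = 1)
  (hp_real : forall l, (2 <= l < k)%N -> p l \is Num.real)
  (hp_gt1 : forall l, (2 <= l < k)%N -> 1 < p l) :
  ((3 <= k)%N ->
     forall x y : C, x \is Num.real -> y \is Num.real ->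
       -1 < x -> x < y -> y < 1 -> gfun k alpha p y < gfun k alpha p x)
  /\
  (k = 2%N ->
     forall x : C, x \is Num.real -> -1 < x -> x < 1 ->
       gfun k alpha p x = (alpha 0%N - alpha 1%N) / 2).
Proof.
have pR : forall l, (l < k)%N -> p l \is Num.real.
  move=> [|[|l]] hl; first by rewrite hp0 rpredN rpred1.
    by rewrite hp1 rpred1.
  by apply: hp_real; rewrite hl.
split.
- move=> hk3 x y xR yR h1 hxy h2.
  have h1y : -1 < y by apply: lt_trans hxy.
  have h2x : x < 1 by apply: lt_trans h2.
  rewrite !gfun_sum //.
  have [k' ek] : exists k', k = k'.+3 by exists (k - 3)%N; rewrite -addn3 subnK.
  subst k.
  rewrite !big_ord_recl /= hp0 hp1 !hterm_m1 // !hterm_1 // !ltrD2l.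
  apply: ltr_leD.
    rewrite ltr_pM2l ?halpha_pos //; apply: hterm_dec => //; exact: hp_gt1.
  apply: ler_sum => i _; rewrite ler_pM2l ?halpha_pos //; last first.
    by rewrite /bump !leq0n !add1n !ltnS ltn_ord.
  rewrite le_eqVlt hterm_dec ?orbT //; apply: hp_gt1.
  by rewrite /bump !leq0n !add1n !ltnS ltn_ord.
- move=> ek x xR h1 h2; subst k.
  rewrite gfun_sum // !big_ord_recl big_ord0 /= hp0 hp1 hterm_m1 // hterm_1 //.
  by rewrite addr0 mulrN mulrBl.
Qed.
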